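(* Let $n\ge1$, $G\le S_n$ and $\chi:G\to\mathbb{C}$ any function. For every $\sigma\in S_n$, $$d_\chi^G(S_\sigma)=\sum_{\tau\in X_\sigma}\hat\chi(\tau).$$
   Context: $S_n$ is the symmetric group on $[n]=\{1,\dots,n\}$. For $G\le S_n$ and $\chi:G\to\mathbb C$, $\hat\chi:S_n\to\mathbb C$ is the extension of $\chi$ that vanishes outside $G$, and the generalized matrix function $d_\chi^G:M_n(\mathbb C)\to\mathbb C$ is $d_\chi^G(A)=\sum_{\sigma\in S_n}\hat\chi(\sigma)\prod_{i=1}^n A_{i\,\sigma(i)}$. For $\sigma\in S_n$, $S_\sigma$ is the $n\times n$ $0/1$ matrix with $(S_\sigma)_{ij}=1$ iff $\sigma(i)=j$ or $\sigma^{-1}(i)=j$. Every $\sigma\in S_n$ has a unique (up to order) decomposition $\sigma=\sigma_1\cdots\sigma_k$ into pairwise disjoint cycles of length at least $2$ ($k=0$ for the identity). For a cycle $\omega=(a_1\,a_2\,\dots\,a_s)$ with $s$ even, let $S(\omega)=\{(a_1\,a_2)(a_3\,a_4)\cdots(a_{s-1}\,a_s),\ (a_s\,a_1)(a_2\,a_3)\cdots(a_{s-2}\,a_{s-1})\}$. Set $X_\omega=\{\omega,\omega^{-1}\}$ if $s$ is odd and $X_\omega=\{\omega,\omega^{-1}\}\cup S(\omega)$ if $s$ is even; for $\sigma=\sigma_1\cdots\sigma_k$ set $X_\sigma=\{\tau_1\cdots\tau_k:\tau_j\in X_{\sigma_j}\}$ ($X_{\mathrm{id}}=\{\mathrm{id}\}$).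 *)

(* Defs.v *)
From HB Require Import structures.
From mathcomp Require Import all_boot all_order all_algebra all_fingroup all_field.
Set Implicit Arguments. Unset Strict Implicit. Unset Printing Implicit Defensive.
Import GRing.Theory Num.Theory.
Local Open Scope ring_scope.

Definition chihat n (G : {group 'S_n}) (chi : 'S_n -> algC) (s : 'S_n) : algC :=
  if s \in G then chi s else 0.

Definition gmf n (G : {group 'S_n}) (chi : 'S_n -> algC) (A : 'M[algC]_n) : algC :=
  \sum_(s : 'S_n) chihat G chi s * \prod_(i < n) A i (s i).

Definition Smat n (s : 'S_n) : 'M[algC]_n :=
  \matrix_(i < n, j < n) (if (s i == j) || ((s^-1)%g i == j) then 1 else 0).

Section Cycles.
Variable T : finType.
Local Open Scope group_scope.

Fixpoint prod_pairs (a : seq T) : {perm T} :=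
  match a with
  | x :: y :: r => tperm x y * prod_pairs r
  | _ => 1
  end.

Definition psupp (w : {perm T}) : {set T} := [set x | w x != x].

(* X_omega for a cycle omega = (a1 ... as), with a1 any point of the support
   and a_{k+1} = omega a_k;
   S(omega) = { (a1 a2)...(a_{s-1} a_s), (a_s a1)(a2 a3)...(a_{s-2} a_{s-1}) } *)
Definition Xcyc (w : {perm T}) : {set {perm T}} :=
  let s := #|psupp w| in
  if odd s then [set w; w^-1]
  else if [pick x in psupp w] is Some x then
    let a := traject w x s in
    [set w; w^-1; prod_pairs a; prod_pairs (rotr 1 a)]
  else [set w; w^-1].

Definition cycles (s : {perm T}) : {set {perm T}} :=
  [set restr_perm O s | O in [set O in porbits s | 1 < #|O|]%N].

Definition Xlist (l : seq {perm T}) : {set {perm T}} :=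
  foldr (fun (w : {perm T}) (acc : {set {perm T}}) => [set t * u | t in Xcyc w, u in acc]) [set 1] l.

Definition Xperm (s : {perm T}) : {set {perm T}} := Xlist (enum (cycles s)).
End Cycles.

(* Main.v *)
Require Import Defs.
From HB Require Import structures.
From mathcomp Require Import all_boot all_order all_algebra all_fingroup all_field.
From mathcomp Require Import zify.
Set Implicit Arguments. Unset Strict Implicit. Unset Printing Implicit Defensive.

Section Comb.
Variable T : finType.
Local Open Scope group_scope.
Implicit Types (w t u : {perm T}).

Definition Vp w : pred {perm T} :=
  fun t => [forall i, (t i == w i) || (t i == w^-1 i)].

Definition Vl (l : seq {perm T}) : pred {perm T} :=
  fun t => [forall i, if has (fun w => i \in psupp w) l
     then all (fun w => (i \in psupp w) ==> ((t i == w i) || (t i == w^-1 i))) l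
     else t i == i].

Lemma psuppE w x : (x \in psupp w) = (w x != x).
Proof. by rewrite inE. Qed.

Lemma psupp_w w x : x \in psupp w -> w x \in psupp w.
Proof. by rewrite !psuppE (inj_eq perm_inj). Qed.

Lemma psupp_wV w x : x \in psupp w -> w^-1 x \in psupp w.
Proof.
rewrite !psuppE permKV; apply: contra => /eqP h.
by rewrite {1}h permKV.
Qed.

Lemma out_wV w x : x \notin psupp w -> w^-1 x = x.
Proof. by rewrite psuppE negbK => /eqP h; rewrite -{1}h permK. Qed.

Lemma Vp_out w t x : Vp w t -> x \notin psupp w -> t x = x.
Proof.
move=> /forallP /(_ x) Ht Hx; move: (Hx); rewrite psuppE negbK => /eqP Hw.
by case/orP: Ht => /eqP ->; rewrite ?out_wV.
Qed.

Lemma Vp_in w t x : Vp w t -> x \in psupp w -> t x \in psupp w.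
Proof.
move=> /forallP /(_ x) Ht Hx.
by case/orP: Ht => /eqP ->; rewrite ?psupp_w ?psupp_wV.
Qed.

Lemma stab_iff t (S : {set T}) : {in S, forall i, t i \in S} ->
  forall i, (t i \in S) = (i \in S).
Proof.
move=> HS.
have E : t @: S = S.
  apply/eqP; rewrite eqEcard card_imset ?leqnn ?andbT; last exact: perm_inj.
  by apply/subsetP => _ /imsetP[j Hj ->]; apply: HS.
move=> i; apply/idP/idP; last exact: HS.
by rewrite -{1}E => /imsetP[j Hj /perm_inj ->].
Qed.

Lemma injA t (S : {set T}) : {in S, forall i, t i \in S} ->
  injective (fun i => if i \in S then t i else i).
Proof.
move=> HS i j /=; have E := stab_iff HS.
case: ifP => Hi; case: ifP => Hj.
- exact: perm_inj.
- by move=> h; move: Hj; rewrite -h HS.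
- by move=> h; move: Hi; rewrite h HS.
- by [].
Qed.

Lemma injB t (S : {set T}) : {in S, forall i, t i \in S} ->
  injective (fun i => if i \in S then i else t i).
Proof.
move=> HS i j /=; have E := stab_iff HS.
case: ifP => Hi; case: ifP => Hj.
- by [].
- by move=> h; move: Hj; rewrite -E -h Hi.
- by move=> h; move: Hi; rewrite -E h Hj.
- exact: perm_inj.
Qed.

Lemma Xlist_Vl l : pairwise (fun u v => [disjoint psupp u & psupp v]) l ->
  {in l, forall w, Xcyc w = [set t | Vp w t]} -> Xlist l = [set t | Vl l t].
Proof.
elim: l => [|w l IH] /=.
  move=> _ _; apply/setP => t; rewrite !inE; apply/eqP/forallP => [-> i|H].
    by rewrite perm1.
  by apply/permP => i; rewrite perm1; apply/eqP; apply: H.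
move=> /andP[Hd Hp] HX.
rewrite IH //; last by move=> v Hv; apply: HX; rewrite inE Hv orbT.
rewrite HX ?mem_head //; apply/setP => tau; rewrite inE.
have Hdis v x : v \in l -> x \in psupp w -> x \in psupp v = false.
  by move=> Hv Hx; apply: disjointFr Hx; apply: (allP Hd).
have Hhas x : x \in psupp w -> has (fun v => x \in psupp v) l = false.
  by move=> Hx; apply/hasPn => v Hv; rewrite Hdis.
apply/imset2P/idP.
  move=> [t u]; rewrite !inE => Ht /forallP Hu ->; apply/forallP => i.
  rewrite permM /=.
  case Hi: (i \in psupp w) => /=.
    have Hti := Vp_in Ht Hi.
    have := Hu (t i); rewrite Hhas // => /eqP ->.
    move/forallP: Ht => /(_ i) -> /=.
    by apply/allP => v Hv; rewrite Hdis.
  rewrite (Vp_out Ht) ?Hi //; have := Hu i.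
move=> /forallP Htau.
set S := psupp w.
have HS : {in S, forall i, tau i \in S}.
  move=> i Hi; have := Htau i; rewrite /= Hi /= => /andP[].
  by case/orP => /eqP ->; rewrite ?psupp_w ?psupp_wV.
exists (perm (injA HS)) (perm (injB HS)); rewrite ?inE.
- apply/forallP => i; rewrite permE.
  case: ifP => Hi.
    by have := Htau i; rewrite /= Hi /= => /andP[].
  by move: Hi; rewrite psuppE => /negbFE/eqP ->; rewrite eqxx.
- apply/forallP => i; rewrite permE.
  case HiS: (i \in S); first by rewrite Hhas. 
  have := Htau i; rewrite /= HiS /=; case: (has _ l) => //.
- apply/permP => i; rewrite permM !permE.
  have E := stab_iff HS.
  by case Hi: (i \in S); rewrite ?E Hi.
Qed.
End Comb.


Section PP.
Variable T : finType.
Local Open Scope group_scope.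

Lemma PP_gen n (b : seq T) (x : T) : size b = n.*2 -> uniq b ->
  (forall z, z \notin b -> prod_pairs b z = z) /\
  (forall k, k < size b -> prod_pairs b (nth x b k) =
     nth x b (if odd k then k.-1 else k.+1)).
Proof.
elim: n b => [|n IH] [|p [|q r]] //=; try by move=> _ _; split=> // z; rewrite perm1.
move=> [Hs] /and3P[]; rewrite inE negb_or => /andP[Hpq Hpr] Hqr Ur.
have [IH1 IH2] := IH r Hs Ur.
split.
  move=> z; rewrite !inE !negb_or => /and3P[Hzp Hzq Hzr].
  by rewrite permM tpermD 1?eq_sym // IH1.
case=> [|[|k]] Hk /=; rewrite permM.
- by rewrite tpermL IH1.
- by rewrite tpermR IH1.
- have Hkr : k < size r by [].
  have Hz : nth x r k \in r by apply: mem_nth.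
  rewrite tpermD; last first.
  + by apply: contraNneq Hqr => ->.
  + by apply: contraNneq Hpr => ->.
  rewrite IH2 //; case Ho: (odd k) => //=; move: Ho.
  by case: k {Hk Hkr Hz} => [|k].
Qed.
End PP.


Section Cyc.
Variable T : finType.
Local Open Scope group_scope.
Variable w : {perm T}.
Hypothesis Hcyc : forall y, y \in psupp w -> porbit w y = psupp w.
Local Notation s := #|psupp w|.

Section Base.
Variable y : T.
Hypothesis Hy : y \in psupp w.

Lemma L1 : iter s w y = y.
Proof. by rewrite -(Hcyc Hy) iter_porbit. Qed.

Lemma Luniq : uniq (traject w y s).
Proof. by have := uniq_traject_porbit w y; rewrite (Hcyc Hy). Qed.

Lemma L3 i j : i < s -> j < s -> iter i w y = iter j w y -> i = j.
Proof.
move=> Hi Hj E; apply/eqP.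
by rewrite -(nth_uniq y _ _ Luniq) ?size_traject // !nth_traject // E.
Qed.

Lemma Lmem z : (z \in traject w y s) = (z \in psupp w).
Proof. by have := porbit_traject w y z; rewrite (Hcyc Hy) => <-. Qed.

Lemma L4 z : z \in psupp w -> exists2 k, k < s & z = iter k w y.
Proof. by rewrite -Lmem => /trajectP. Qed.

Lemma L5 k : iter k w y \in psupp w.
Proof. by rewrite -(Hcyc Hy) -permX mem_porbit. Qed.

Lemma L6 k : w^-1 (iter k.+1 w y) = iter k w y.
Proof. by rewrite iterS permK. Qed.

Definition Ff (t : {perm T}) k := t (iter k w y) == iter k.+1 w y.

Lemma Vp_dis t k : Vp w t -> ~~ Ff t k -> t (iter k w y) = w^-1 (iter k w y).
Proof. by move=> /forallP /(_ (iter k w y)) /orP[/eqP E|/eqP //]; rewrite /Ff E eqxx. Qed.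

Lemma step2 t k : 2 < s -> Vp w t -> Ff t k -> Ff t k.+2.
Proof.
move=> Hs Vt Hf.
have := forallP Vt (iter k.+2 w y); case/orP => // /eqP E.
rewrite L6 in E; move/eqP: Hf => Hf; rewrite -Hf in E.
move/perm_inj: E => E.
have E2 : iter 2 w y = iter 0 w y.
  by apply: (@perm_inj _ (w ^+ k)); rewrite !permX -!iterD addn0 addn2.
by have := L3 Hs (leq_ltn_trans (leq0n 2) Hs) E2.
Qed.

Lemma stepm t k m : 2 < s -> Vp w t -> Ff t k -> Ff t (k + 2 * m).
Proof.
move=> Hs Vt Hf; elim: m => [|m IH]; first by rewrite muln0 addn0.
have -> : k + 2 * m.+1 = (k + 2 * m).+2 by lia.
by apply: step2.
Qed.

Lemma perFf t k : Ff t (k + s) = Ff t k.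
Proof. by rewrite /Ff -addSn !iterD L1. Qed.

Lemma perFfm t k m : Ff t (k + s * m) = Ff t k.
Proof.
elim: m => [|m IH]; first by rewrite muln0 addn0.
by rewrite mulnS addnA addnAC perFf.
Qed.

Lemma odd_all t k j : 2 < s -> odd s -> Vp w t -> Ff t k -> Ff t j.
Proof.
move=> Hs Ho Vt.
have S1 i : Ff t i -> Ff t i.+1.
  move=> Hi; have := stepm (s.+1)./2 Hs Vt Hi.
  have h2 := odd_double_half s.+1; rewrite /= Ho /= add0n in h2.
  have -> : i + 2 * (s.+1)./2 = i.+1 + s.
    by rewrite -h2 -muln2 mulnC; lia.
  by rewrite perFf.
have SD i d : Ff t i -> Ff t (i + d).
  by elim: d => [|d IH] Hi; rewrite ?addn0 // addnS; apply: S1; apply: IH.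
move=> Hk; rewrite -(perFfm t j k).
have -> : j + s * k = k + ((s - 1) * k + j).
  have : 0 < s by lia. by move=> _; nia.
exact: SD.
Qed.

Lemma even_FfS t k : 2 < s -> ~~ odd s -> Vp w t -> Ff t k.+2 = Ff t k.
Proof.
move=> Hs He Vt; apply/idP/idP; last exact: step2.
move=> Hf; have := stepm (s./2 - 1) Hs Vt Hf.
have h2 := odd_double_half s; rewrite (negbTE He) add0n in h2.
have -> : k.+2 + 2 * (s./2 - 1) = k + s.
  rewrite -{2}h2 -muln2; lia.
by rewrite perFf.
Qed.

Lemma even_FfE t k : 2 < s -> ~~ odd s -> Vp w t -> Ff t k = Ff t (odd k).
Proof.
move=> Hs He Vt; rewrite -{1}(odd_double_half k).
elim: k./2 => [|m IH]; first by rewrite addn0.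
by rewrite doubleS !addnS even_FfS.
Qed.

Lemma P_traject k : ~~ odd s -> k < s ->
  prod_pairs (traject w y s) (iter k w y) =
    if odd k then iter k.-1 w y else iter k.+1 w y.
Proof.
move=> He Hk.
have h2 := odd_double_half s; rewrite (negbTE He) add0n in h2.
have [_ P2] := PP_gen y (etrans (size_traject _ _ _) (esym h2)) Luniq.
have := P2 k; rewrite size_traject nth_traject // => -> //.
case Ho: (odd k); first by rewrite nth_traject //; lia.
rewrite nth_traject //.
have : k.+1 != s by apply: contraNneq He => <-; rewrite /= Ho.
lia.
Qed.

Lemma P_out z : ~~ odd s -> z \notin psupp w -> prod_pairs (traject w y s) z = z.
Proof.
move=> He Hz.
have h2 := odd_double_half s; rewrite (negbTE He) add0n in h2.
have [P1 _] := PP_gen y (etrans (size_traject _ _ _) (esym h2)) Luniq.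
by apply: P1; rewrite Lmem.
Qed.

Lemma P_Vp : ~~ odd s -> Vp w (prod_pairs (traject w y s)).
Proof.
move=> He; apply/forallP => z.
case Hz: (z \in psupp w); last first.
  by rewrite P_out ?Hz //; move: Hz; rewrite psuppE => /negbFE/eqP ->; rewrite eqxx.
have [k Hk ->] := L4 Hz; rewrite P_traject //.
case: ifP => Ho; last by rewrite eqxx.
by case: k Hk Ho => [|k] //= _ _; rewrite L6 eqxx orbT.
Qed.

Lemma TF t : 2 < s -> ~~ odd s -> Vp w t -> Ff t 0 -> ~~ Ff t 1 ->
  t = prod_pairs (traject w y s).
Proof.
move=> Hs He Vt F0 F1; apply/permP => z.
case Hz: (z \in psupp w); last first.
  by rewrite P_out ?Hz // (Vp_out Vt) ?Hz.
have [k Hk ->] := L4 Hz; rewrite P_traject //.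
have := even_FfE k Hs He Vt.
case Ho: (odd k) => E.
  have F1' : ~~ Ff t k by rewrite E.
  rewrite (Vp_dis Vt F1').
  by case: k Hk Ho E F1' => [|k] //= _ _ _ _; rewrite L6.
by move: F0; rewrite -E => /eqP.
Qed.

End Base.

Lemma rotr_traject (f : T -> T) y m : iter m.+1 f y = y ->
  rotr 1 (traject f y m.+1) = traject f (iter m f y) m.+1.
Proof.
move=> H; rewrite trajectSr rotr1_rcons.
have -> : traject f (iter m f y) m.+1 = iter m f y :: traject f (iter m.+1 f y) m by [].
by rewrite H.
Qed.

Lemma exists_supp : 0 < s -> exists y, y \in psupp w.
Proof. by rewrite card_gt0 => /set0Pn. Qed.

Lemma Xcyc_Vp : 1 < s -> Xcyc w = [set t | Vp w t].
Proof.
move=> Hs1; rewrite /Xcyc /=.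
case: ifP => Ho.
  have Hs : 2 < s.
    have : s != 2 by apply: contraTneq Ho => ->.
    lia.
  have [y Hy] := exists_supp (ltnW Hs1).
  apply/setP => t; rewrite !inE; apply/idP/idP.
    by case/orP => /eqP ->; apply/forallP=> i; rewrite eqxx ?orbT.
  move=> Vt; case Hf: (Ff y t 0).
    apply/orP; left; apply/eqP/permP => z.
    case Hz: (z \in psupp w); last first.
      by rewrite (Vp_out Vt) ?Hz //; move: Hz; rewrite psuppE => /negbFE/eqP ->.
    have [k Hk ->] := L4 Hy Hz.
    by have := @odd_all y Hy t 0 k Hs Ho Vt Hf; rewrite /Ff => /eqP ->.
  apply/orP; right; apply/eqP/permP => z.
  case Hz: (z \in psupp w); last first.
    by rewrite (Vp_out Vt) ?Hz // out_wV ?Hz.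
  have [k Hk ->] := L4 Hy Hz.
  apply: (Vp_dis Vt); apply/negP => Hk'.
  by move: (@odd_all y Hy t k 0 Hs Ho Vt Hk'); rewrite Hf.
case: pickP => [x0 Hx0|H0]; last first.
  have : #|psupp w| = 0 by apply: eq_card0.
  lia.
have He : ~~ odd s by rewrite Ho.
apply/setP => t; rewrite !inE.
have s0 : 0 < s by lia.
set y' := iter s.-1 w x0.
have Hy' : y' \in psupp w by apply: L5.
have Hrot : rotr 1 (traject w x0 s) = traject w y' s.
  have := @rotr_traject w x0 s.-1; rewrite prednK //; apply.
  exact: L1.
rewrite Hrot; apply/idP/idP.
  case/orP => [/orP[/orP[|]|]|] /eqP ->.
  - by apply/forallP => i; rewrite eqxx.
  - by apply/forallP => i; rewrite eqxx orbT.
  - exact: P_Vp.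
  - exact: P_Vp.
move=> Vt.
have [s2|s2] := eqVneq s 2.
  apply/orP; left; apply/orP; left; apply/orP; left; apply/eqP/permP => z.
  case Hz: (z \in psupp w); last by rewrite (Vp_out Vt) ?Hz //; move: Hz; rewrite psuppE => /negbFE/eqP ->.
  have := L1 Hz; rewrite s2 /= => E2.
  have := forallP Vt z; case/orP => /eqP -> //.
  by rewrite -{1}E2 permK.
have Hs : 2 < s by lia.
case F0: (Ff x0 t 0); case F1: (Ff x0 t 1).
- apply/orP; left; apply/orP; left; apply/orP; left; apply/eqP/permP => z.
  case Hz: (z \in psupp w); last by rewrite (Vp_out Vt) ?Hz //; move: Hz; rewrite psuppE => /negbFE/eqP ->.
  have [k Hk ->] := L4 Hx0 Hz.
  have := @even_FfE x0 Hx0 t k Hs He Vt.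
  by case: (odd k); rewrite ?F0 ?F1 => /eqP.
- apply/orP; left; apply/orP; right; apply/eqP.
  by apply: (@TF x0 Hx0 t Hs He Vt); rewrite ?F0 ?F1.
- apply/orP; right; apply/eqP; apply: (@TF y' Hy' t Hs He Vt).
  + have E k : Ff y' t k = Ff x0 t (k + s.-1) by rewrite /Ff -!iterD addSn.
    rewrite E add0n (@even_FfE x0 Hx0 t _ Hs He Vt).
    have -> : odd s.-1 by move: He; rewrite -{1}(prednK s0) /= negbK.
    by rewrite F1.
  + have E k : Ff y' t k = Ff x0 t (k + s.-1) by rewrite /Ff -!iterD addSn.
    rewrite E add1n prednK // -(add0n s) (perFf Hx0). by rewrite F0.
- apply/orP; left; apply/orP; left; apply/orP; right; apply/eqP/permP => z.
  case Hz: (z \in psupp w); last by rewrite (Vp_out Vt) ?Hz // out_wV ?Hz.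
  have [k Hk ->] := L4 Hx0 Hz.
  apply: (Vp_dis Vt).
  have := @even_FfE x0 Hx0 t k Hs He Vt.
  by case: (odd k); rewrite ?F0 ?F1 => ->.
Qed.
End Cyc.


Section Sig.
Variable T : finType.
Local Open Scope group_scope.
Variable sg : {perm T}.

Lemma stabO (O : {set T}) : O \in porbits sg -> forall z, (sg z \in O) = (z \in O).
Proof.
case/imsetP => x _ -> z.
rewrite -!eq_porbit_mem; have := porbit_perm sg 1 z; rewrite expg1 => -> //.
Qed.

Lemma normO (O : {set T}) : O \in porbits sg -> sg \in 'N(O | 'P).
Proof. by move=> HO; apply/astabsP => z /=; rewrite stabO. Qed.

Lemma wE (O : {set T}) z : O \in porbits sg -> z \in O -> restr_perm O sg z = sg z.
Proof. by move=> HO Hz; rewrite restr_permE ?normO. Qed.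

Lemma wout (O : {set T}) z : z \notin O -> restr_perm O sg z = z.
Proof. by move=> Hz; rewrite (out_perm (restr_perm_on _ _)). Qed.

Lemma wVE (O : {set T}) z : O \in porbits sg -> z \in O -> (restr_perm O sg)^-1 z = sg^-1 z.
Proof.
move=> HO Hz; have Hz' : sg^-1 z \in O by rewrite -(stabO HO) permKV.
by apply: (@perm_inj _ (restr_perm O sg)); rewrite permKV wE // permKV.
Qed.

Lemma orbit_eq (O : {set T}) z : O \in porbits sg -> z \in O -> O = porbit sg z.
Proof.
by case/imsetP => x _ -> Hz; apply/esym/eqP; rewrite eq_porbit_mem.
Qed.

Lemma fix_card1 z : sg z = z -> #|porbit sg z| <= 1.
Proof.
move=> Hz; rewrite -(cards1 z); apply: subset_leq_card.
apply/subsetP => u /porbitP[i ->]; by rewrite permX_fix ?inE.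
Qed.

Lemma moved (O : {set T}) z : O \in porbits sg -> 1 < #|O| -> z \in O -> sg z != z.
Proof.
move=> HO H1 Hz; apply/eqP => E; have := fix_card1 E.
by rewrite -(orbit_eq HO Hz); lia.
Qed.

Lemma psupp_rw (O : {set T}) : O \in porbits sg -> 1 < #|O| -> psupp (restr_perm O sg) = O.
Proof.
move=> HO H1; apply/setP => z; rewrite psuppE.
case Hz: (z \in O); first by rewrite wE // (moved HO).
by rewrite wout ?Hz ?eqxx.
Qed.

Lemma iter_w (O : {set T}) y i : O \in porbits sg -> y \in O ->
  iter i (restr_perm O sg) y = iter i sg y /\ iter i sg y \in O.
Proof.
move=> HO Hy; elim: i => [|i [IH1 IH2]] //=.
by rewrite IH1 wE // stabO.
Qed.

Lemma porbit_w (O : {set T}) y : O \in porbits sg -> y \in O ->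
  porbit (restr_perm O sg) y = O.
Proof.
move=> HO Hy; rewrite [RHS](orbit_eq HO Hy); apply/setP => z.
apply/porbitP/porbitP => [] [i ->]; exists i; rewrite !permX;
  by case: (iter_w i HO Hy) => ->.
Qed.
End Sig.


Lemma pairwise_uniqP (X : eqType) (r : rel X) (l : seq X) : uniq l ->
  (forall u v, u \in l -> v \in l -> u != v -> r u v) -> pairwise r l.
Proof.
elim: l => [|x l IH] //= /andP[Hx Ul] H.
apply/andP; split; last by apply: IH => // u v Hu Hv; apply: H; rewrite inE ?Hu ?Hv orbT.
apply/allP => v Hv; apply: H; rewrite ?inE ?eqxx ?Hv ?orbT //.
by apply: contraNneq Hx => ->.
Qed.

Section Fin.
Variable T : finType.
Local Open Scope group_scope.
Variable sg : {perm T}.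

Lemma memC w : w \in cycles sg ->
  exists O : {set T}, [/\ O \in porbits sg, 1 < #|O| & w = restr_perm O sg].
Proof. by case/imsetP => O; rewrite inE => /andP[HO H1] ->; exists O. Qed.

Lemma Xperm_Vp : Xperm sg = [set t | Vp sg t].
Proof.
rewrite /Xperm Xlist_Vl; first last.
- move=> w; rewrite mem_enum => /memC[O [HO H1 ->]].
  apply: Xcyc_Vp; rewrite psupp_rw //.
  by move=> y Hy; rewrite porbit_w.
- apply: pairwise_uniqP; first exact: enum_uniq.
  move=> u v; rewrite !mem_enum => /memC[O1 [HO1 H11 ->]] /memC[O2 [HO2 H12 ->]] Hne.
  rewrite !psupp_rw // disjoints_subset; apply/subsetP => z z1.
  rewrite inE; apply/negP => z2.
  move/eqP: Hne; apply.
  by rewrite (orbit_eq HO1 z1) (orbit_eq HO2 z2).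
apply/setP => t; rewrite !inE /Vl /Vp; apply: eq_forallb => i.
case Hi: (sg i == i).
  have Hv : sg^-1 i = i by rewrite -{1}(eqP Hi) permK.
  rewrite (eqP Hi) Hv orbb.
  have -> // : has (fun w => i \in psupp w) (enum (cycles sg)) = false.
  apply/hasPn => w; rewrite mem_enum => /memC[O [HO H1 ->]].
  rewrite psupp_rw //; apply/negP => HiO.
  by have := moved HO H1 HiO; rewrite Hi.
have HO : porbit sg i \in porbits sg by apply: imset_f.
have H1 : 1 < #|porbit sg i|.
  have : [set i; sg i] \subset porbit sg i.
    apply/subsetP => z; rewrite !inE => /orP[] /eqP ->; first exact: porbit_id.
    by have := mem_porbit sg 1 i; rewrite expg1.
  move/subset_leq_card; rewrite cards2 eq_sym Hi //.
have Hw0 : restr_perm (porbit sg i) sg \in enum (cycles sg).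
  by rewrite mem_enum; apply/imsetP; exists (porbit sg i); rewrite // inE HO H1.
have Hi0 : i \in psupp (restr_perm (porbit sg i) sg) by rewrite psupp_rw // porbit_id.
have -> : has (fun w => i \in psupp w) (enum (cycles sg)).
  by apply/hasP; exists (restr_perm (porbit sg i) sg).
apply/allP/idP.
  move=> /(_ _ Hw0); rewrite Hi0 /=.
  by rewrite wE ?wVE ?porbit_id.
move=> Hc w; rewrite mem_enum => /memC[O [HO' H1' ->]].
rewrite psupp_rw //; apply/implyP => HiO.
by rewrite wE ?wVE.
Qed.
End Fin.


Import GRing.Theory Num.Theory.
Local Open Scope ring_scope.

Lemma step1 n (G : {group 'S_n}) chi (sigma : 'S_n) :
  gmf G chi (Smat sigma) = \sum_(t | Vp sigma t) chihat G chi t.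
Proof.
rewrite /gmf (bigID (Vp sigma)) /= [X in _ + X]big1 ?addr0.
  apply: eq_bigr => t /forallP Ht; rewrite big1 ?mulr1 // => i _.
  by rewrite mxE; case/orP: (Ht i) => /eqP <-; rewrite eqxx ?orbT.
move=> t; rewrite /Vp negb_forall => /existsP[i Hi].
rewrite (bigD1 i) //= mxE; move: Hi; rewrite ![_ == t i]eq_sym => /negbTE ->.
by rewrite mul0r mulr0.
Qed.

Unset Implicit Arguments.

Theorem mainTheorem4 (n : nat) (hn : (1 <= n)%N) (G : {group 'S_n})
  (chi : 'S_n -> algC) (sigma : 'S_n) :
  gmf G chi (Smat sigma) = \sum_(tau in Xperm sigma) chihat G chi tau.
Proof.
rewrite step1 Xperm_Vp; apply: eq_bigl => t; by rewrite inE.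
Qed.
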